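(* Let $G$ be a graph of order $n$ with vertex degrees $d_1\ge d_2\ge\cdots\ge d_n$. Then $$\mathcal E(G)\le 2\sum_{i=1}^h d_i,$$ where $h=\min\{\nu^+(G),\nu^-(G)\}$.
   Context: All graphs are finite and simple. $\mathcal E(G)$ is the sum of absolute values of the adjacency eigenvalues of $G$; $\nu^+(G)$ and $\nu^-(G)$ are the numbers of positive and negative adjacency eigenvalues. *)

(* Defs.v *)
From mathcomp Require Import all_boot all_order all_algebra all_field.
Set Implicit Arguments. Unset Strict Implicit. Unset Printing Implicit Defensive.
Import Order.TTheory GRing.Theory Num.Theory.
Local Open Scope ring_scope.

Definition simple_graph (n : nat) (e : rel 'I_n) : Prop :=
  symmetric e /\ irreflexive e.

Definition adjmx (n : nat) (e : rel 'I_n) : 'M[algC]_n :=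
  \matrix_(i, j) (e i j)%:R.

(* The adjacency eigenvalues, listed with algebraic multiplicity:
   a list r with char_poly A = lead_coef * \prod_(z <- r) ('X - z). *)
Definition spectrum (n : nat) (e : rel 'I_n) : seq algC :=
  sval (closed_field_poly_normal (char_poly (adjmx e))).

Definition energy (n : nat) (e : rel 'I_n) : algC :=
  \sum_(l <- spectrum e) `|l|.

Definition nu_pos (n : nat) (e : rel 'I_n) : nat :=
  count (fun l => 0 < l) (spectrum e).
Definition nu_neg (n : nat) (e : rel 'I_n) : nat :=
  count (fun l => l < 0) (spectrum e).

Definition deg (n : nat) (e : rel 'I_n) (i : 'I_n) : nat := #|[set j | e i j]|.

Definition degseq (n : nat) (e : rel 'I_n) : seq nat :=
  sort geq [seq deg e i | i <- enum 'I_n].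

Definition sum_top_degrees (n : nat) (e : rel 'I_n) (h : nat) : nat :=
  sumn (take h (degseq e)).

(* Main.v *)
Require Import Defs.
From mathcomp Require Import all_boot all_order all_algebra all_field ring.
Set Implicit Arguments. Unset Strict Implicit. Unset Printing Implicit Defensive.
Import Order.TTheory GRing.Theory Num.Theory.
Local Open Scope ring_scope.
Local Open Scope sesquilinear_scope.

Lemma comb_bound (n : nat) (f : 'I_n -> nat) (x : 'I_n -> algC) (c : nat) :
  (forall i, 0 <= x i) -> (forall i, x i <= 1) -> \sum_i x i = c%:R -> (c <= n)%N ->
  \sum_i (f i)%:R * x i <= (sumn (take c (sort geq [seq f i | i <- enum 'I_n])))%:R.
Proof.
move=> x0 x1 xs cn.
pose r := relpre f geq.
have r_tot : total r by move=> i j; rewrite /r /= leq_total.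
have r_tr : transitive r by move=> i j k; rewrite /r /= => h1 h2; apply: leq_trans h2 h1.
set vs := sort r (enum 'I_n).
have Hvs : perm_eq vs (enum 'I_n) by rewrite perm_sort.
have -> : sort geq [seq f i | i <- enum 'I_n] = [seq f i | i <- vs] by rewrite sort_map.
rewrite -map_take sumnE big_map natr_sum.
have -> : \sum_i (f i)%:R * x i = \sum_(i <- vs) (f i)%:R * x i.
  by rewrite (perm_big _ Hvs) big_enum.
have xs' : \sum_(i <- vs) x i = c%:R by rewrite (perm_big _ Hvs) big_enum.
have svs : size vs = n by rewrite size_sort size_enum_ord.
have := sort_sorted r_tot (enum 'I_n); rewrite -/vs (sorted_pairwise r_tr).
rewrite -(cat_take_drop c vs) pairwise_cat => /and3P[/allrelP Hrel _ _].
move: xs'; rewrite -(cat_take_drop c vs) big_cat /=.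
have sH : size (take c vs) = c by rewrite size_take svs; case: ltngtP cn => // ->.
set H := take c vs; set L := drop c vs => xs'.
pose t := (\max_(j <- L) f j)%N.
have h1 : \sum_(i <- L) (f i)%:R * x i <= t%:R * \sum_(i <- L) x i.
  rewrite mulr_sumr !big_seq; apply: ler_sum => i iL; apply: ler_wpM2r => //.
  by rewrite ler_nat; apply: leq_bigmax_seq.
have h2 : t%:R * \sum_(i <- H) (1 - x i) <= \sum_(i <- H) (f i)%:R * (1 - x i).
  rewrite mulr_sumr !big_seq; apply: ler_sum => i iH; apply: ler_wpM2r; first by rewrite subr_ge0.
  by rewrite ler_nat; apply/bigmax_leqP_seq => j jL _; apply: (Hrel i j).
have h3 : \sum_(i <- L) x i = \sum_(i <- H) (1 - x i).
  have e1 : forall l : seq 'I_n, \sum_(i <- l) (1:algC) = (size l)%:R.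
    by elim=> [|a l IH]; rewrite ?big_nil ?big_cons ?IH //= mulrS.
  by rewrite sumrB e1 sH -xs' addrAC subrr add0r.
have h4 : \sum_(i <- H) (f i)%:R * x i + \sum_(i <- H) (f i)%:R * (1 - x i) = \sum_(i <- H) (f i)%:R.
  by rewrite -big_split /=; apply: eq_bigr => i _; rewrite -mulrDr addrC subrK mulr1.
rewrite !cat_take_drop -/H -/L -h4 -{1}(cat_take_drop c vs) big_cat /= lerD2l; apply: le_trans h1 _; rewrite h3; exact: h2.
Qed.

Section S.
Variables (n : nat) (e : rel 'I_n).
Hypothesis He : simple_graph e.
Local Notation A := (adjmx e).
Local Notation P := (spectralmx A).
Local Notation D := (spectral_diag A).

Lemma adj_herm : A \is hermsymmx.
Proof.
apply/is_hermitianmxP; rewrite expr0 scale1r; apply/matrixP => i j.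
by rewrite !mxE conjC_nat (proj1 He).
Qed.

Lemma P_unitary : P *m P ^t* = 1%:M.
Proof. exact/unitarymxP/spectral_unitarymx. Qed.

Lemma P_unitary' : P ^t* *m P = 1%:M.
Proof. exact: mulmx1C P_unitary. Qed.

Lemma A_decomp : A = P ^t* *m diag_mx D *m P.
Proof.
have := hermitian_normalmx adj_herm => /orthomx_spectralP {1}->.
rewrite invmx_unitary //; exact: spectral_unitarymx.
Qed.

Lemma D_decomp : diag_mx D = P *m A *m P ^t*.
Proof.
have := A_decomp; have := P_unitary.
move: P D => Q E HQ ->.
by rewrite !mulmxA HQ mul1mx -mulmxA HQ mulmx1.
Qed.

Lemma D_real k : D 0 k \is Num.real.
Proof. by have /mxOverP := hermitian_spectral_diag_real adj_herm; apply. Qed.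

Lemma char_poly_similar (m : nat) (V B : 'M[algC]_m) : V \in unitmx ->
  char_poly (invmx V *m B *m V) = char_poly B.
Proof.
move=> Vu; rewrite /char_poly /char_poly_mx.
have -> : 'X%:M - map_mx polyC (invmx V *m B *m V) =
   map_mx polyC (invmx V) *m ('X%:M - map_mx polyC B) *m map_mx polyC V.
  rewrite mulmxBr mulmxBl !map_mxM; congr (_ - _).
  rewrite mul_mx_scalar -scalemxAl -map_mxM mulVmx // map_mx1.
  by rewrite scalemx1.
rewrite !det_mulmx mulrC mulrA -det_mulmx -map_mxM mulmxV // map_mx1 det1 mul1r //.
Qed.

Lemma spectrum_perm : perm_eq (spectrum e) [seq D 0 k | k <- enum 'I_n].
Proof.
rewrite /spectrum; case: closed_field_poly_normal => r /= Hr.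
have Hc : char_poly A = \prod_(k < n) ('X - (D 0 k)%:P).
  have /orthomx_spectralP HA := hermitian_normalmx adj_herm.
  rewrite {1}HA.
  rewrite char_poly_similar ?spectral_unit // char_poly_trig ?diag_mx_is_trig //.
  by apply: eq_bigr => k _; rewrite mxE eqxx mulr1n.
move: Hr; rewrite (monicP (char_poly_monic A)) scale1r Hc => Hr.
apply: prod_XsubC_eq; rewrite -Hr big_map big_enum /=.
by apply: eq_bigl => k; rewrite inE.
Qed.

Lemma D_entry k : D 0 k = \sum_i \sum_j P k i * A i j * (P k j)^*.
Proof.
have /matrixP/(_ k k) := D_decomp; rewrite !mxE eqxx mulr1n => ->.
rewrite exchange_big /=; apply: eq_bigr => j _; rewrite !mxE mulr_suml.
by apply: eq_bigr => i _; rewrite !mxE.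
Qed.

Lemma A_ge0 i j : 0 <= A i j.
Proof. by rewrite mxE ler0n. Qed.

Lemma deg_sum i : \sum_j A i j = (deg e i)%:R.
Proof.
rewrite /deg -sum1_card natr_sum [RHS]big_mkcond /=; apply: eq_bigr => j _.
by rewrite !mxE inE; case: (e i j).
Qed.

Lemma amgm (a b : algC) : 0 <= a -> 0 <= b -> (a * b) *+ 2 <= a ^+ 2 + b ^+ 2.
Proof.
move=> a0 b0; rewrite -subr_ge0.
have -> : a ^+ 2 + b ^+ 2 - (a * b) *+ 2 = (a - b) ^+ 2 by rewrite sqrrB; ring.
by rewrite -realEsqr rpredB // ger0_real.
Qed.

Lemma key (S : {set 'I_n}) (s : algC) : s \is Num.real -> `|s| <= 1 ->
  \sum_(k in S) s * D 0 k <= (sum_top_degrees e #|S|)%:R.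
Proof.
move=> sR s1.
pose c i j := \sum_(k in S) P k i * (P k j)^*.
pose x i := \sum_(k in S) `|P k i| ^+ 2.
have E1 : \sum_(k in S) s * D 0 k = s * \sum_i \sum_j A i j * c i j.
  rewrite -mulr_sumr; congr (s * _).
  under eq_bigr do rewrite D_entry.
  rewrite exchange_big /=; apply: eq_bigr => i _.
  rewrite exchange_big /=; apply: eq_bigr => j _.
  rewrite /c mulr_sumr; apply: eq_bigr => k _.
  by rewrite -mulrA mulrCA.
have E2 : \sum_(k in S) s * D 0 k <= \sum_i \sum_j A i j * `|c i j|.
  have R : \sum_(k in S) s * D 0 k \is Num.real.
    by apply: rpred_sum => k _; rewrite rpredM // D_real.
  apply: le_trans (real_ler_norm R) _.
  rewrite E1 normrM; apply: le_trans (ler_piMl _ s1) _ ; first exact: normr_ge0.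
  apply: le_trans (ler_norm_sum _ _ _) _; apply: ler_sum => i _.
  apply: le_trans (ler_norm_sum _ _ _) _; apply: ler_sum => j _.
  by rewrite normrM ger0_norm // A_ge0.
have E3 i j : `|c i j| *+ 2 <= x i + x j.
  rewrite /x -big_split /=.
  apply: (@le_trans _ _ ((\sum_(k in S) `|P k i| * `|P k j|) *+ 2)).
  - rewrite lerMn2r /=; apply: le_trans (ler_norm_sum _ _ _) _.
    by apply: ler_sum => k _; rewrite normrM norm_conjC.
  - by rewrite -sumrMnl; apply: ler_sum => k _; apply: amgm; exact: normr_ge0.
have E4 : \sum_i \sum_j A i j * (x i + x j) = (\sum_i (deg e i)%:R * x i) *+ 2.
  rewrite mulr2n.
  under eq_bigr do under eq_bigr do rewrite mulrDr.
  under eq_bigr do rewrite big_split /=.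
  rewrite big_split /=; congr (_ + _).
  - by apply: eq_bigr => i _; rewrite -mulr_suml deg_sum.
  - rewrite exchange_big /=; apply: eq_bigr => j _; rewrite -mulr_suml -deg_sum.
    by congr (_ * _); apply: eq_bigr => i _; rewrite !mxE (proj1 He).
have E5 : \sum_(k in S) s * D 0 k <= \sum_i (deg e i)%:R * x i.
  suff : (\sum_(k in S) s * D 0 k) *+ 2 <= (\sum_i (deg e i)%:R * x i) *+ 2.
    by rewrite lerMn2r.
  rewrite -E4; apply: (@le_trans _ _ ((\sum_i \sum_j A i j * `|c i j|) *+ 2)).
    by rewrite lerMn2r.
  rewrite -sumrMnl; apply: ler_sum => i _; rewrite -sumrMnl; apply: ler_sum => j _.
  by rewrite -mulrnAr; apply: ler_wpM2l; [exact: A_ge0 | exact: E3].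
apply: le_trans E5 _; apply: comb_bound.
- by move=> i; apply: sumr_ge0 => k _; apply: exprn_ge0; exact: normr_ge0.
- move=> i; have <- : \sum_k `|P k i| ^+ 2 = 1.
    have /matrixP/(_ i i) := P_unitary'; rewrite !mxE eqxx mulr1n => <-.
    by apply: eq_bigr => k _; rewrite !mxE normCKC.
  by rewrite [X in _ <= X](bigID (mem S)) /= lerDl; apply: sumr_ge0 => k _; apply: exprn_ge0; exact: normr_ge0.
- rewrite /x exchange_big /= -sumr_const; apply: eq_bigr => k _.
  have /matrixP/(_ k k) := P_unitary; rewrite !mxE eqxx mulr1n => <-.
  by apply: eq_bigr => i _; rewrite !mxE normCK.
- by rewrite -[n in (_ <= n)%N]card_ord max_card.
Qed.

End S.

Lemma abs_split (d : algC) : d \is Num.real ->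
  `|d| = (if 0 < d then d else 0) + (if 0 < -1 * d then -1 * d else 0) /\
  d = (if 0 < d then d else 0) - (if 0 < -1 * d then -1 * d else 0).
Proof.
move=> dR; rewrite mulN1r oppr_gt0.
case: (real_ltgtP dR (rpred0 _)) => [dlt|dgt|de].
- by rewrite add0r sub0r opprK ltr0_norm.
- by rewrite addr0 subr0 gtr0_norm.
- by rewrite de normr0 addr0 subr0.
Qed.

Lemma count_card (n : nat) (p : pred 'I_n) : count p (enum 'I_n) = #|[set k | p k]|.
Proof.
by rewrite -sum1_count -sum1_card big_enum_cond /=; apply: eq_bigl => k; rewrite inE.
Qed.

Theorem mainTheorem13 (n : nat) (e : rel 'I_n) :
  simple_graph e ->
  energy e <= 2 * (sum_top_degrees e (minn (nu_pos e) (nu_neg e)))%:R.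
Proof.
move=> He.
set A := adjmx e.
set D := spectral_diag A.
have tr0 : \sum_k D 0 k = 0.
  have : \tr (diag_mx D) = \tr A.
    rewrite D_decomp // mxtrace_mulC mulmxA P_unitary' // mul1mx //.
  rewrite mxtrace_diag => ->; rewrite /mxtrace; apply: big1 => i _.
  by rewrite !mxE (proj2 He i).
have En : energy e = \sum_k `|D 0 k|.
  by rewrite /energy (perm_big _ (spectrum_perm He)) big_map big_enum.
pose Sp := [set k | 0 < D 0 k]; pose Sn := [set k | 0 < -1 * D 0 k].
have nup : nu_pos e = #|Sp|.
  by rewrite /nu_pos (permP (spectrum_perm He)) count_map count_card.
have nun : nu_neg e = #|Sn|.
  rewrite /nu_neg (permP (spectrum_perm He)) count_map count_card.
  by apply: eq_card => k; rewrite !inE /= mulN1r oppr_gt0.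
have Hpn : \sum_k `|D 0 k| = \sum_(k in Sp) D 0 k + \sum_(k in Sn) (-1 * D 0 k).
  rewrite [X in _ = X + _]big_mkcond [X in _ = _ + X]big_mkcond -big_split /=; apply: eq_bigr => k _.
  by rewrite !inE; case: (abs_split (D_real He k)).
have Hz : \sum_(k in Sp) D 0 k = \sum_(k in Sn) (-1 * D 0 k).
  apply/eqP; rewrite -subr_eq0; apply/eqP; rewrite -[RHS]tr0 [X in X - _]big_mkcond [X in _ - X]big_mkcond -sumrB /=.
  apply: eq_bigr => k _.
  by rewrite !inE; case: (abs_split (D_real He k)) => _ <-.
rewrite En Hpn.
case: (leqP (nu_pos e) (nu_neg e)) => hle.
- rewrite nup -Hz mulr_natl mulr2n.
  have HK : \sum_(k in Sp) D 0 k <= (sum_top_degrees e #|Sp|)%:R.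
    rewrite (eq_bigr (fun k => 1 * D 0 k)); last by move=> k _; rewrite mul1r.
    by apply: key => //; rewrite normr1.
  exact: (lerD HK HK).
- rewrite nun Hz mulr_natl mulr2n.
  have HK : \sum_(k in Sn) (-1 * D 0 k) <= (sum_top_degrees e #|Sn|)%:R.
    by apply: key => //; rewrite ?rpredN1 // normrN1.
  exact: (lerD HK HK).
Qed.
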